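(* Let $\gamma$ be a locally monotone Jordan curve with a continuous periodic parametrisation $\gamma:\mathbb{R}\to\mathbb{C}$ and local monotonicity constant $\mu$. Let $\varphi:\mathbb{R}\to\mathbb{R}_{\ge0}$ be smooth, supported in $[-1,1]$, with $\int_{\mathbb{R}}\varphi=1$, and for $\varepsilon>0$ set \[ \gamma_\varepsilon(s)=\int_{\mathbb{R}}\frac1\varepsilon\varphi\!\left(\frac u\varepsilon\right)\gamma(s-u)\,du . \] Let $\mu_\varepsilon$ be the local monotonicity constant of $\gamma_\varepsilon$ (which for sufficiently small $\varepsilon$ is a smooth locally monotone Jordan curve). Then $\liminf_{\varepsilon\to0}\mu_\varepsilon\ge\mu$.
   Context: Locally monotone: a Jordan curve with periodic parametrisation $\gamma$ is locally monotone if for every $\theta\in\mathbb{R}$ there are an open interval $U_\theta=(\theta_1,\theta_2)\ni\theta$ and a unit vector $v_\theta\in\mathbb{R}^2$ such that $g_{v_\theta}(s)=\gamma(s)\cdot v_\theta$ is strictly monotone on $U_\theta$. For such a pair put $\mu(\theta,v_\theta,U_\theta)=\min\{|g_{v_\theta}(\theta)-g_{v_\theta}(\theta_1)|,|g_{v_\theta}(\theta)-g_{v_\theta}(\theta_2)|\}$, let $\mu(\theta)$ be the maximal (supremal) value of $\mu(\theta,v_\theta,U_\theta)$ over all admissible pairs, and define the local monotonicity constant of $\gamma$ as $\mu=\min_{\theta\in\mathbb{R}}\mu(\theta)$ (infimum). *)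

(* Defs.v *)
From Stdlib Require Import Reals.
From Coquelicot Require Import Coquelicot.
Open Scope R_scope.

(* Points of the plane C = R^2 are pairs of reals. *)
Definition pt := (R * R)%type.

Definition dotp (p v : pt) : R := fst p * fst v + snd p * snd v.

Definition unit_vec (v : pt) : Prop := fst v ^ 2 + snd v ^ 2 = 1.

Definition gv (gamma : R -> pt) (v : pt) (s : R) : R := dotp (gamma s) v.

Definition strict_mono_on (f : R -> R) (a b : R) : Prop :=
  (forall x y, a < x -> x < y -> y < b -> f x < f y) \/
  (forall x y, a < x -> x < y -> y < b -> f y < f x).

Definition admissible (gamma : R -> pt) (th th1 th2 : R) (v : pt) : Prop :=
  th1 < th < th2 /\ unit_vec v /\ strict_mono_on (gv gamma v) th1 th2.

Definition mu_triple (gamma : R -> pt) (th th1 th2 : R) (v : pt) : R :=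
  Rmin (Rabs (gv gamma v th - gv gamma v th1))
       (Rabs (gv gamma v th - gv gamma v th2)).

(* mu(theta): supremum over admissible pairs (m_infty if there is none). *)
Definition mu_at (gamma : R -> pt) (th : R) : Rbar :=
  Rbar_lub (fun x : Rbar => exists th1 th2 v,
     admissible gamma th th1 th2 v /\ x = Finite (mu_triple gamma th th1 th2 v)).

Definition loc_mono_const (gamma : R -> pt) : Rbar :=
  Rbar_glb (fun x : Rbar => exists th : R, x = mu_at gamma th).

Definition locally_monotone (gamma : R -> pt) : Prop :=
  forall th : R, exists th1 th2 v, admissible gamma th th1 th2 v.

Definition jordan_param (gamma : R -> pt) : Prop :=
  (forall s, continuous (fun t => fst (gamma t)) s) /\
  (forall s, continuous (fun t => snd (gamma t)) s) /\
  exists T : R, 0 < T /\ (forall s, gamma (s + T) = gamma s) /\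
    (forall s t, 0 <= s < T -> 0 <= t < T -> gamma s = gamma t -> s = t).

Definition smooth (f : R -> R) : Prop := forall (n : nat) (x : R), ex_derive_n f n x.

(* mollification gamma_eps(s) = int_R (1/eps) phi(u/eps) gamma(s-u) du;
   since supp phi is in [-1,1], the integrand vanishes outside [-eps,eps]. *)
Definition mollify (phi : R -> R) (gamma : R -> pt) (eps : R) (s : R) : pt :=
  (RInt (fun u => / eps * phi (u / eps) * fst (gamma (s - u))) (- eps) eps,
   RInt (fun u => / eps * phi (u / eps) * snd (gamma (s - u))) (- eps) eps).

(* Main.v *)
Require Import Defs.
From Stdlib Require Import Reals Lra Lia ZArith IndefiniteDescription.
From Coquelicot Require Import Coquelicot.
Open Scope R_scope.

Lemma cont_eps (f : R -> R) x : continuous f x -> forall e, 0 < e ->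
  exists d, 0 < d /\ forall y, Rabs (y - x) < d -> Rabs (f y - f x) < e.
Proof.
  intros H e He.
  destruct (H (ball (f x) (mkposreal e He))) as [d Hd].
  { apply locally_ball. }
  exists d; split; [apply cond_pos|].
  intros y Hy. apply (Hd y). exact Hy.
Qed.

Definition w (phi : R -> R) (eps u : R) := / eps * phi (u / eps).
Definition conv (phi : R -> R) (eps : R) (h : R -> R) (s : R) :=
  RInt (fun u => w phi eps u * h (s - u)) (- eps) eps.

Lemma w_cont phi eps u : (forall x, continuous phi x) -> continuous (w phi eps) u.
Proof.
  intros Hc. unfold w.
  apply (continuous_mult (fun _ => / eps) (fun u => phi (u / eps))).
  apply continuous_const.
  apply (continuous_comp (fun u => u / eps) phi). 2: apply Hc.
  apply (continuous_mult (fun u => u) (fun _ => / eps)).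
  apply continuous_id. apply continuous_const.
Qed.

Lemma shift_cont (h : R -> R) s u : (forall x, continuous h x) ->
  continuous (fun u => h (s - u)) u.
Proof.
  intros Hc. apply (continuous_comp (fun u => s - u) h). 2: apply Hc.
  apply (continuous_minus (fun _ => s) (fun u => u)).
  apply continuous_const. apply continuous_id.
Qed.

Lemma integrand_cont phi eps (h : R -> R) s u : (forall x, continuous phi x) ->
  (forall x, continuous h x) ->
  continuous (fun u => w phi eps u * h (s - u)) u.
Proof.
  intros Hp Hh.
  apply (continuous_mult (w phi eps) (fun u => h (s - u))).
  apply w_cont; auto. apply shift_cont; auto.
Qed.

Lemma ex_integrand phi eps (h : R -> R) s a b : (forall x, continuous phi x) ->
  (forall x, continuous h x) ->
  ex_RInt (fun u => w phi eps u * h (s - u)) a b.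
Proof.
  intros Hp Hh. apply (ex_RInt_continuous (V:=R_CompleteNormedModule)). intros; apply integrand_cont; auto.
Qed.

Lemma ex_w phi eps a b : (forall x, continuous phi x) -> ex_RInt (w phi eps) a b.
Proof.
  intros Hp. apply (ex_RInt_continuous (V:=R_CompleteNormedModule)).
  intros; apply w_cont; auto.
Qed.

Lemma w_int phi eps : (forall x, continuous phi x) -> 0 < eps ->
  RInt phi (-1) 1 = 1 -> RInt (w phi eps) (- eps) eps = 1.
Proof.
  intros Hp He H1.
  assert (E := RInt_comp_lin (V:=R_CompleteNormedModule) phi (/ eps) 0 (- eps) eps).
  replace (/ eps * - eps + 0) with (-1) in E by (field; lra).
  replace (/ eps * eps + 0) with 1 in E by (field; lra).
  rewrite <- H1, <- E.
  2:{ apply (ex_RInt_continuous (V:=R_CompleteNormedModule)). intros; apply Hp. }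
  apply RInt_ext. intros x _. unfold w, scal; simpl; unfold mult; simpl.
  f_equal. f_equal. unfold Rdiv. ring.
Qed.

Lemma conv_diff phi eps h s c : (forall x, continuous phi x) ->
  (forall x, continuous h x) -> 0 < eps -> RInt phi (-1) 1 = 1 ->
  conv phi eps h s - c = RInt (fun u => w phi eps u * (h (s - u) - c)) (- eps) eps.
Proof.
  intros Hp Hh He H1. unfold conv.
  rewrite <- (Rmult_1_r c) at 1. rewrite <- (w_int phi eps Hp He H1).
  transitivity (RInt (fun u => minus (w phi eps u * h (s - u)) (scal c (w phi eps u))) (- eps) eps).
  rewrite (RInt_minus (V:=R_CompleteNormedModule)). rewrite (RInt_scal (V:=R_CompleteNormedModule)). unfold minus, plus, opp, scal; simpl.
  unfold mult; simpl. ring.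
  apply ex_w; auto. apply ex_integrand; auto.
  apply (ex_RInt_scal (V:=R_CompleteNormedModule)). apply ex_w; auto.
  apply RInt_ext. intros x _. unfold minus, plus, opp, scal; simpl. unfold mult; simpl. ring.
Qed.

Lemma w_nonneg phi eps u : (forall x, 0 <= phi x) -> 0 < eps -> 0 <= w phi eps u.
Proof.
  intros Hn He. unfold w. apply Rmult_le_pos. left; apply Rinv_0_lt_compat; auto. auto.
Qed.

Lemma conv_close phi (h : R -> R) p : (forall x, continuous phi x) ->
  (forall x, 0 <= phi x) -> RInt phi (-1) 1 = 1 ->
  (forall x, continuous h x) -> forall eta, 0 < eta ->
  exists d, 0 < d /\ forall s eps, Rabs (s - p) < d -> 0 < eps < d ->
    Rabs (conv phi eps h s - h p) <= eta.
Proof.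
  intros Hp Hn H1 Hh eta Heta.
  destruct (cont_eps h p (Hh p) eta Heta) as [d [Hd Hd']].
  exists (d / 2); split; [lra|].
  intros s eps Hs He.
  rewrite conv_diff; auto; try lra.
  assert (Hw1 := w_int phi eps Hp (proj1 He) H1).
  assert (B: forall u, - eps < u < eps -> Rabs (h (s - u) - h p) < eta).
  { intros u Hu. apply Hd'. unfold Rabs in *. repeat destruct Rcase_abs; lra. }
  apply Rabs_le. split.
  - apply Rle_trans with (RInt (fun u => scal (- eta) (w phi eps u)) (- eps) eps).
    rewrite (RInt_scal (V:=R_CompleteNormedModule)). rewrite Hw1. unfold scal; simpl; unfold mult; simpl; lra.
    apply ex_w; auto.
    apply RInt_le. lra. apply (ex_RInt_scal (V:=R_CompleteNormedModule)). apply ex_w; auto.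
    apply (ex_RInt_continuous (V:=R_CompleteNormedModule)). intros.
    apply (continuous_mult (w phi eps) (fun u => h (s - u) - h p)). apply w_cont; auto.
    apply (continuous_minus (fun u => h (s - u)) (fun _ => h p)). apply shift_cont; auto.
    apply continuous_const.
    intros u Hu. specialize (B u Hu). assert (0 <= w phi eps u) by (apply w_nonneg; auto; lra).
    unfold scal; simpl; unfold mult; simpl.
    apply Rabs_def2 in B. nra.
  - apply Rle_trans with (RInt (fun u => scal eta (w phi eps u)) (- eps) eps).
    apply RInt_le. lra.
    apply (ex_RInt_continuous (V:=R_CompleteNormedModule)). intros.
    apply (continuous_mult (w phi eps) (fun u => h (s - u) - h p)). apply w_cont; auto.
    apply (continuous_minus (fun u => h (s - u)) (fun _ => h p)). apply shift_cont; auto.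
    apply continuous_const.
    apply (ex_RInt_scal (V:=R_CompleteNormedModule)). apply ex_w; auto.
    intros u Hu. specialize (B u Hu). assert (0 <= w phi eps u) by (apply w_nonneg; auto; lra).
    unfold scal; simpl; unfold mult; simpl.
    apply Rabs_def2 in B. nra.
    rewrite (RInt_scal (V:=R_CompleteNormedModule)). rewrite Hw1. unfold scal; simpl; unfold mult; simpl; lra.
    apply ex_w; auto.
Qed.

Lemma phi_pos phi : (forall x, continuous phi x) -> (forall x, 0 <= phi x) ->
  (forall x, phi x <> 0 -> -1 <= x <= 1) -> RInt phi (-1) 1 = 1 ->
  exists p q, -1 <= p /\ p < q /\ q <= 1 /\ forall x, p < x < q -> 0 < phi x.
Proof.
  intros Hp Hn Hs H1.
  destruct (Classical_Prop.classic (exists c, phi c <> 0)) as [[c Hc]|Hno].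
  - assert (Hc' : 0 < phi c) by (destruct (Hn c); auto; congruence).
    destruct (cont_eps phi c (Hp c) (phi c) Hc') as [d [Hd Hd']].
    assert (Pos : forall x, Rabs (x - c) < d -> 0 < phi x).
    { intros x Hx. specialize (Hd' x Hx). apply Rabs_def2 in Hd'. lra. }
    exists (c - d / 2), (c + d / 2).
    assert (A1 : 0 < phi (c - d/2)) by (apply Pos; rewrite Rabs_left; lra).
    assert (A2 : 0 < phi (c + d/2)) by (apply Pos; rewrite Rabs_right; lra).
    destruct (Hs (c - d/2)); [lra|]. destruct (Hs (c + d/2)); [lra|].
    repeat split; try lra.
    intros x Hx. apply Pos. unfold Rabs; destruct Rcase_abs; lra.
  - exfalso. assert (RInt phi (-1) 1 = RInt (fun _ => 0) (-1) 1).
    { apply RInt_ext. intros x _. destruct (Req_dec (phi x) 0); auto.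
      exfalso; apply Hno; eauto. }
    rewrite RInt_const in H. unfold scal in H; simpl in H; unfold mult in H; simpl in H.
    lra.
Qed.

Lemma RInt_pos_split (F : R -> R) e a b : -e <= a -> a < b -> b <= e ->
  (forall x, continuous F x) -> (forall u, -e < u < e -> 0 <= F u) ->
  (forall u, a < u < b -> 0 < F u) -> 0 < RInt F (-e) e.
Proof.
  intros Ha Hab Hb Hc H0 H1.
  assert (Ex : forall x y, ex_RInt F x y).
  { intros; apply (ex_RInt_continuous (V:=R_CompleteNormedModule)); intros; apply Hc. }
  rewrite <- (RInt_Chasles F (-e) a e); auto.
  rewrite <- (RInt_Chasles F a b e); auto.
  unfold plus; simpl.
  assert (0 <= RInt F (-e) a). { apply RInt_ge_0; auto. intros; apply H0; lra. }
  assert (0 <= RInt F b e). { apply RInt_ge_0; auto. intros; apply H0; lra. }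
  assert (0 < RInt F a b). { apply RInt_gt_0; auto. }
  lra.
Qed.

Lemma conv_incr phi (h : R -> R) t1 t2 eps a b : (forall x, continuous phi x) ->
  (forall x, 0 <= phi x) -> (forall x, phi x <> 0 -> -1 <= x <= 1) ->
  RInt phi (-1) 1 = 1 -> (forall x, continuous h x) -> 0 < eps ->
  t1 + eps <= a -> b + eps <= t2 ->
  (forall x y, t1 < x -> x < y -> y < t2 -> h x < h y) ->
  forall x y, a < x -> x < y -> y < b -> conv phi eps h x < conv phi eps h y.
Proof.
  intros Hp Hn Hs H1 Hh He Ha Hb Hm x y Hx Hxy Hy.
  destruct (phi_pos phi Hp Hn Hs H1) as [p [q [Hp1 [Hpq [Hq1 Hpos]]]]].
  apply Rminus_gt_0_lt.
  unfold conv.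
  rewrite <- (RInt_minus (V:=R_CompleteNormedModule)); try (apply ex_integrand; auto).
  apply RInt_pos_split with (eps * p) (eps * q).
  - nra. - nra. - nra.
  - intros u. apply (continuous_minus (fun u => w phi eps u * h (y - u)) (fun u => w phi eps u * h (x - u)));
      apply integrand_cont; auto.
  - intros u Hu. unfold minus, plus, opp; simpl.
    assert (0 <= w phi eps u) by (apply w_nonneg; auto).
    assert (h (x - u) < h (y - u)) by (apply Hm; lra). nra.
  - intros u Hu. unfold minus, plus, opp; simpl.
    assert (0 < w phi eps u).
    { unfold w. apply Rmult_lt_0_compat. apply Rinv_0_lt_compat; auto.
      apply Hpos. split.
      apply Rmult_lt_reg_r with eps; auto. unfold Rdiv; rewrite Rmult_assoc, Rinv_l; lra.
      apply Rmult_lt_reg_r with eps; auto. unfold Rdiv; rewrite Rmult_assoc, Rinv_l; lra. }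
    assert (h (x - u) < h (y - u)) by (apply Hm; nra). nra.
Qed.

Lemma gv_cont gamma v : (forall s, continuous (fun t => fst (gamma t)) s) ->
  (forall s, continuous (fun t => snd (gamma t)) s) ->
  forall x, continuous (gv gamma v) x.
Proof.
  intros H1 H2 x. unfold gv, dotp.
  apply (continuous_plus (fun t => fst (gamma t) * fst v) (fun t => snd (gamma t) * snd v)).
  apply (continuous_mult (fun t => fst (gamma t)) (fun _ => fst v)); auto using continuous_const.
  apply (continuous_mult (fun t => snd (gamma t)) (fun _ => snd v)); auto using continuous_const.
Qed.

Lemma moll_gv phi gamma eps v s : (forall x, continuous phi x) ->
  (forall s, continuous (fun t => fst (gamma t)) s) ->
  (forall s, continuous (fun t => snd (gamma t)) s) ->
  gv (mollify phi gamma eps) v s = conv phi eps (gv gamma v) s.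
Proof.
  intros Hp H1 H2. unfold gv at 1, dotp, mollify, conv; simpl.
  transitivity (RInt (fun u => plus (scal (fst v) (w phi eps u * fst (gamma (s - u))))
                                    (scal (snd v) (w phi eps u * snd (gamma (s - u))))) (- eps) eps).
  - rewrite (RInt_plus (V:=R_CompleteNormedModule)).
    rewrite !(RInt_scal (V:=R_CompleteNormedModule)).
    unfold plus, scal; simpl; unfold mult; simpl. unfold w. ring.
    apply (ex_integrand phi eps (fun t => snd (gamma t))); auto.
    apply (ex_integrand phi eps (fun t => fst (gamma t))); auto.
    apply (ex_RInt_scal (V:=R_CompleteNormedModule)).
    apply (ex_integrand phi eps (fun t => fst (gamma t))); auto.
    apply (ex_RInt_scal (V:=R_CompleteNormedModule)).
    apply (ex_integrand phi eps (fun t => snd (gamma t))); auto.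
  - apply RInt_ext. intros x _. unfold plus, scal, gv, dotp; simpl; unfold mult; simpl. ring.
Qed.

Lemma conv_opp phi eps (h : R -> R) s : (forall x, continuous phi x) ->
  (forall x, continuous h x) ->
  conv phi eps (fun t => - h t) s = - conv phi eps h s.
Proof.
  intros Hp Hh. unfold conv.
  transitivity (RInt (fun u => opp (w phi eps u * h (s - u))) (- eps) eps).
  apply RInt_ext. intros; unfold opp; simpl; ring.
  rewrite (RInt_opp (V:=R_CompleteNormedModule)). reflexivity.
  apply ex_integrand; auto.
Qed.

Lemma lub_ge (E : Rbar -> Prop) x : E x -> Rbar_le x (Rbar_lub E).
Proof. intros H. unfold Rbar_lub. generalize (proj2_sig (Rbar_ex_lub E)). intros [Hu _]. apply Hu; auto. Qed.

Lemma lub_gt (E : Rbar -> Prop) (m : R) : Rbar_lt m (Rbar_lub E) -> exists x, E x /\ Rbar_lt m x.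
Proof.
  intros H. apply Classical_Prop.NNPP. intros Hn.
  unfold Rbar_lub in H. generalize (proj2_sig (Rbar_ex_lub E)). intros [_ Hl].
  assert (Rbar_le (proj1_sig (Rbar_ex_lub E)) m).
  { apply Hl. intros x Ex. apply Rbar_not_lt_le. intros Hlt. apply Hn; eauto. }
  apply (Rbar_lt_not_le _ _ H H0).
Qed.

Lemma glb_le (E : Rbar -> Prop) x : E x -> Rbar_le (Rbar_glb E) x.
Proof. intros H. unfold Rbar_glb. generalize (proj2_sig (Rbar_ex_glb E)). intros [Hu _]. apply Hu; auto. Qed.

Lemma glb_ge (E : Rbar -> Prop) b : (forall x, E x -> Rbar_le b x) -> Rbar_le b (Rbar_glb E).
Proof. intros H. unfold Rbar_glb. generalize (proj2_sig (Rbar_ex_glb E)). intros [_ Hl]. apply Hl; auto. Qed.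

Lemma abs_tri A B A' B' m e : m < Rabs (A - B) -> Rabs (A' - A) <= e -> Rabs (B' - B) <= e ->
  m - 2 * e < Rabs (A' - B').
Proof. unfold Rabs; repeat destruct Rcase_abs; lra. Qed.

Lemma local_step gamma phi c m' th th1 th2 v :
  (forall x, continuous phi x) -> (forall x, 0 <= phi x) ->
  (forall x, phi x <> 0 -> -1 <= x <= 1) -> RInt phi (-1) 1 = 1 ->
  (forall s, continuous (fun t => fst (gamma t)) s) ->
  (forall s, continuous (fun t => snd (gamma t)) s) ->
  c < m' -> admissible gamma th th1 th2 v -> m' < mu_triple gamma th th1 th2 v ->
  exists d, 0 < d /\ forall th' eps, Rabs (th' - th) < d -> 0 < eps < d ->
    exists a b v', admissible (mollify phi gamma eps) th' a b v' /\
      c < mu_triple (mollify phi gamma eps) th' a b v'.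
Proof.
  intros Hp Hn Hs H1 Hg1 Hg2 Hcm [[Ht1 Ht2] [Hu Hmono]] Htr.
  assert (Hg := gv_cont gamma v Hg1 Hg2).
  set (g := gv gamma v) in *.
  unfold mu_triple in Htr. fold g in Htr.
  assert (D1 : m' < Rabs (g th - g th1)) by (eapply Rlt_le_trans; [exact Htr| apply Rmin_l]).
  assert (D2 : m' < Rabs (g th - g th2)) by (eapply Rlt_le_trans; [exact Htr| apply Rmin_r]).
  set (eta := (m' - c) / 4).
  assert (Heta : 0 < eta) by (unfold eta; lra).
  destruct (conv_close phi g th Hp Hn H1 Hg eta Heta) as [d0 [Hd0 C0]].
  destruct (conv_close phi g th1 Hp Hn H1 Hg eta Heta) as [d1 [Hd1 C1]].
  destruct (conv_close phi g th2 Hp Hn H1 Hg eta Heta) as [d2 [Hd2 C2]].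
  set (a := th1 + Rmin d1 (th - th1) / 2).
  set (b := th2 - Rmin d2 (th2 - th) / 2).
  assert (Ra1 := Rmin_l d1 (th - th1)). assert (Ra2 := Rmin_r d1 (th - th1)).
  assert (Ra3 : 0 < Rmin d1 (th - th1)) by (apply Rmin_pos; lra).
  assert (Rb1 := Rmin_l d2 (th2 - th)). assert (Rb2 := Rmin_r d2 (th2 - th)).
  assert (Rb3 : 0 < Rmin d2 (th2 - th)) by (apply Rmin_pos; lra).
  assert (Ha1 : th1 < a < th) by (unfold a; lra).
  assert (Ha2 : a - th1 < d1) by (unfold a; lra).
  assert (Hb1 : th < b < th2) by (unfold b; lra).
  assert (Hb2 : th2 - b < d2) by (unfold b; lra).
  set (d := Rmin (Rmin d0 (Rmin (a - th1) (th2 - b))) (Rmin (th - a) (b - th))).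
  assert (Hd : 0 < d).
  { unfold d. repeat apply Rmin_pos; lra. }
  assert (Hdd0 : d <= d0). { unfold d. eapply Rle_trans; [apply Rmin_l|]. apply Rmin_l. }
  assert (Hdd1 : d <= a - th1).
  { unfold d. eapply Rle_trans; [apply Rmin_l|]. eapply Rle_trans; [apply Rmin_r|]. apply Rmin_l. }
  assert (Hdd2 : d <= th2 - b).
  { unfold d. eapply Rle_trans; [apply Rmin_l|]. eapply Rle_trans; [apply Rmin_r|]. apply Rmin_r. }
  assert (Hdd3 : d <= th - a). { unfold d. eapply Rle_trans; [apply Rmin_r|]. apply Rmin_l. }
  assert (Hdd4 : d <= b - th). { unfold d. eapply Rle_trans; [apply Rmin_r|]. apply Rmin_r. }
  exists d; split; auto.
  intros th' eps Hth' He.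
  assert (Hth'2 : a < th' < b).
  { revert Hth'. unfold Rabs; destruct Rcase_abs; intros; lra. }
  exists a, b, v. split.
  - split; [exact Hth'2|]. split; [exact Hu|].
    unfold strict_mono_on. destruct Hmono as [Hinc|Hdec].
    + left. intros x y Hx Hxy Hy. rewrite !moll_gv; auto. fold g.
      apply (conv_incr phi g th1 th2 eps a b); auto; lra.
    + right. intros x y Hx Hxy Hy. rewrite !moll_gv; auto. fold g.
      assert (conv phi eps (fun t => - g t) x < conv phi eps (fun t => - g t) y).
      { apply (conv_incr phi (fun t => - g t) th1 th2 eps a b); auto; try lra.
        intros z. apply (continuous_opp g). auto.
        intros x0 y0 H0 H2 H3. specialize (Hdec x0 y0 H0 H2 H3). simpl in Hdec. fold g in Hdec. lra. }
      rewrite !conv_opp in H; auto. lra.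
  - unfold mu_triple. rewrite !moll_gv; auto. fold g.
    assert (E0 : Rabs (conv phi eps g th' - g th) <= eta) by (apply C0; lra).
    assert (E1 : Rabs (conv phi eps g a - g th1) <= eta).
    { apply C1. rewrite Rabs_right; lra. lra. }
    assert (E2 : Rabs (conv phi eps g b - g th2) <= eta).
    { apply C2. rewrite Rabs_left; lra. lra. }
    apply Rmin_glb_lt.
    + assert (H := abs_tri _ _ _ _ _ _ D1 E0 E1). unfold eta in H. lra.
    + assert (H := abs_tri _ _ _ _ _ _ D2 E0 E2). unfold eta in H. lra.
Qed.

Lemma per_nat {A} (f : R -> A) T : (forall s, f (s + T) = f s) ->
  forall n s, f (s + INR n * T) = f s.
Proof.
  intros H n. induction n as [|n IH]; intros s.
  - simpl. rewrite Rmult_0_l, Rplus_0_r. reflexivity.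
  - rewrite S_INR. replace (s + (INR n + 1) * T) with ((s + INR n * T) + T) by ring.
    rewrite H. apply IH.
Qed.

Lemma per_nat_neg {A} (f : R -> A) T : (forall s, f (s + T) = f s) ->
  forall n s, f (s + - (INR n * T)) = f s.
Proof.
  intros H n s. transitivity (f (s + - (INR n * T) + INR n * T)).
  symmetry; apply per_nat; auto. f_equal. ring.
Qed.

Lemma reduce T th : 0 < T -> exists th0 sh, 0 <= th0 <= T /\ th = th0 + sh /\
  exists n, sh = INR n * T \/ sh = - (INR n * T).
Proof.
  intros HT. destruct (archimed (th / T)) as [A1 A2].
  set (z := (up (th / T) - 1)%Z).
  assert (Hz : IZR z = IZR (up (th / T)) - 1) by (unfold z; rewrite minus_IZR; reflexivity).
  assert (B1 : IZR z * T <= th).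
  { assert (IZR z <= th / T) by lra.
    apply Rmult_le_compat_r with (r := T) in H; [|lra].
    unfold Rdiv in H. rewrite Rmult_assoc, Rinv_l in H; lra. }
  assert (B2 : th < IZR z * T + T).
  { assert (th / T < IZR z + 1) by lra.
    apply Rmult_lt_compat_r with (r := T) in H; [|lra].
    unfold Rdiv in H. rewrite Rmult_assoc, Rinv_l in H; lra. }
  exists (th - IZR z * T), (IZR z * T). split; [lra|]. split; [ring|].
  destruct (Z_le_gt_dec 0 z) as [Hpos|Hneg].
  - exists (Z.to_nat z). left. rewrite INR_IZR_INZ. rewrite Z2Nat.id; auto.
  - exists (Z.to_nat (- z)). right. rewrite INR_IZR_INZ. rewrite Z2Nat.id; [|lia].
    rewrite opp_IZR. ring.
Qed.

Lemma moll_per phi gamma eps T : (forall s, gamma (s + T) = gamma s) ->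
  forall s, mollify phi gamma eps (s + T) = mollify phi gamma eps s.
Proof.
  intros H s. unfold mollify. f_equal; apply RInt_ext; intros x _;
  replace (s + T - x) with ((s - x) + T) by ring; rewrite H; reflexivity.
Qed.

Lemma shift_pair (f : R -> pt) sh th a b v : (forall s, f (s + sh) = f s) ->
  admissible f th a b v ->
  admissible f (th + sh) (a + sh) (b + sh) v /\
  mu_triple f (th + sh) (a + sh) (b + sh) v = mu_triple f th a b v.
Proof.
  intros H [[Ha Hb] [Hu Hm]].
  assert (G : forall x, gv f v (x + sh) = gv f v x) by (intros; unfold gv; rewrite H; auto).
  assert (G' : forall x, gv f v x = gv f v (x - sh)).
  { intros x. rewrite <- (G (x - sh)). f_equal. ring. }
  split.
  - split; [lra|]. split; [auto|]. destruct Hm as [Hm|Hm]; [left|right];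
    intros x y Hx Hxy Hy; rewrite (G' x), (G' y); apply Hm; lra.
  - unfold mu_triple. rewrite !G. reflexivity.
Qed.

Lemma pick (m : R) L : Rbar_lt m L -> exists c m', m < c < m' /\ Rbar_lt m' L.
Proof.
  destruct L as [l| |]; simpl; intros H.
  - exists (m + (l - m) / 3), (m + 2 * (l - m) / 3). split; lra.
  - exists (m + 1), (m + 2). split; [lra| exact I].
  - destruct H.
Qed.

Theorem lemma4p2 (gamma : R -> pt) (phi : R -> R) :
  jordan_param gamma ->
  locally_monotone gamma ->
  smooth phi ->
  (forall x, 0 <= phi x) ->
  (forall x, phi x <> 0 -> -1 <= x <= 1) ->
  RInt phi (-1) 1 = 1 ->
  (* liminf_{eps -> 0+} mu_eps >= mu *)
  forall m : R, Rbar_lt (Finite m) (loc_mono_const gamma) ->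
    exists delta : R, 0 < delta /\
      forall eps : R, 0 < eps < delta ->
        Rbar_lt (Finite m) (loc_mono_const (mollify phi gamma eps)).
Proof.
  intros [Hc1 [Hc2 [T [HT [Hper _]]]]] _ Hsm Hn Hs H1 m Hm.
  assert (Hp : forall x, continuous phi x).
  { intros x. apply (ex_derive_continuous (K:=R_AbsRing) (V:=R_NormedModule)). exact (Hsm 1%nat x). }
  destruct (pick m _ Hm) as [c [m' [[Hmc Hcm'] Hm']]].
  assert (HD : forall th, exists d : posreal, forall th' eps, Rabs (th' - th) < d -> 0 < eps < d ->
    exists a b v', admissible (mollify phi gamma eps) th' a b v' /\
      c < mu_triple (mollify phi gamma eps) th' a b v').
  { intros th.
    assert (Rbar_lt m' (mu_at gamma th)).
    { eapply Rbar_lt_le_trans; [exact Hm'|]. apply glb_le. exists th; reflexivity. }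
    destruct (lub_gt _ _ H) as [x [[th1 [th2 [v [Had Hx]]]] Hlt]].
    subst x. simpl in Hlt.
    destruct (local_step gamma phi c m' th th1 th2 v Hp Hn Hs H1 Hc1 Hc2 Hcm' Had Hlt)
      as [d [Hd Hd']].
    exists (mkposreal d Hd). exact Hd'. }
  set (delta := fun t : Compactness.Tn 1 R =>
    proj1_sig (constructive_indefinite_description _ (HD (fst t)))).
  destruct (compactness_value 1 (0, tt) (T, tt) delta) as [d Hd].
  exists d. split; [apply cond_pos|]. intros eps He.
  eapply Rbar_lt_le_trans with (Finite c); [simpl; lra|].
  apply glb_ge. intros x [th Hx]. subst x.
  destruct (reduce T th HT) as [th0 [sh [Hth0 [Eth [n Hsh]]]]].
  assert (Hper' : forall s, mollify phi gamma eps (s + sh) = mollify phi gamma eps s).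
  { destruct Hsh as [E|E]; subst sh.
    - apply per_nat. apply moll_per; auto.
    - apply per_nat_neg. apply moll_per; auto. }
  apply Classical_Prop.NNPP. intros Hneg.
  apply (Hd (th0, tt)). { simpl. split; auto. }
  intros [[t []] [Htb [Hclose Hdle]]]. apply Hneg.
  simpl in Hclose. destruct Hclose as [Hclose _].
  unfold delta in Hdle, Hclose. simpl in Hdle, Hclose.
  destruct (constructive_indefinite_description _ (HD t)) as [dt Hdt]. simpl in Hdle, Hclose.
  destruct (Hdt th0 eps Hclose) as [a [b [v [Had Htr]]]]. lra.
  destruct (shift_pair _ sh th0 a b v Hper' Had) as [Had' Heq].
  rewrite Eth. apply Rbar_le_trans with (Finite (mu_triple (mollify phi gamma eps) (th0 + sh) (a + sh) (b + sh) v)).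
  simpl. rewrite Heq. lra.
  apply lub_ge. exists (a + sh), (b + sh), v. split; auto.
Qed.
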